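(* Let $L_m$ be as defined in the context. If $m\in\{6,8,10\}$, then $\lambda(L_m)>\sqrt{m-2}$. If $m\ge 12$ is even, then $\sqrt{m-2.5}<\lambda(L_m)<\sqrt{m-2}$. Moreover, $\lambda(L_6)\approx 2.1149$, $\lambda(L_8)\approx 2.4938$ and $\lambda(L_{10})\approx 2.8424$.
   Context: For even $m\ge 6$, $L_m$ is the graph obtained from $SK_{2,\frac{m-2}{2}}$ (the complete bipartite graph $K_{2,\frac{m-2}{2}}$ with one edge subdivided) by attaching a pendant edge to a vertex of maximum degree; equivalently, take a 5-cycle $u_1u_2u_3u_4u_5$, add $\frac{m-6}{2}$ new vertices each adjacent exactly to $u_1$ and $u_3$, and one new vertex adjacent only to $u_1$. It has $m$ edges. $\lambda(\cdot)$ denotes the largest adjacency eigenvalue; $\lambda(L_m)$ is the largest root of $x^6-mx^4+(\tfrac{5m}{2}-7)x^2+(4-m)x+2-\tfrac m2$. *)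

(* Defs.v *)
From HB Require Import structures.
From mathcomp Require Import all_boot all_order all_algebra.
Set Implicit Arguments. Unset Strict Implicit. Unset Printing Implicit Defensive.
Import Order.TTheory GRing.Theory Num.Theory.
Local Open Scope ring_scope.

(* The graph L_m (m even, m >= 6) on the vertex set 'I_(m./2 + 3):
   vertices 0,1,2,3,4 are u1,...,u5 (the 5-cycle u1u2u3u4u5),
   vertex 5 is the pendant vertex adjacent only to u1 (= 0),
   vertices 6, ..., m./2 + 2 (there are (m-6)/2 of them) are adjacent
   exactly to u1 (= 0) and u3 (= 2). *)
Definition cyc5_edge (i j : nat) : bool :=
  [&& (i < 5)%N, (j < 5)%N & j == (i.+1 %% 5)%N].

Definition Lm_edge (i j : nat) : bool :=
  [|| cyc5_edge i j, cyc5_edge j i,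
      (i == 0%N) && (j == 5%N), (j == 0%N) && (i == 5%N),
      (i == 0%N) && (6 <= j)%N, (j == 0%N) && (6 <= i)%N,
      (i == 2%N) && (6 <= j)%N | (j == 2%N) && (6 <= i)%N].

Definition Lm_nverts (m : nat) : nat := (m./2 + 3)%N.

Definition Lm_adj (R : ringType) (m : nat) : 'M[R]_(Lm_nverts m) :=
  \matrix_(i, j) (Lm_edge i j)%:R.

Definition largest_eigenvalue (F : numFieldType) (n : nat) (A : 'M[F]_n) (l : F) :=
  eigenvalue A l /\ forall mu : F, eigenvalue A mu -> mu <= l.

(* Main.v *)
Require Import Defs.
From mathcomp Require Import all_boot all_order all_algebra.
From mathcomp Require Import ring lra zify.
Import Order.TTheory GRing.Theory Num.Theory.
Local Open Scope ring_scope.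

Section V.
Context {R : realFieldType}.
Variables (x K : R).
Definition DD := x^+2 * (x^+2 - 1) - (K + 1) * (x^+2 - 1) - x^+2.
Definition NN := (K + 1) * (x^+2 - 1) + x.
Definition va := x * (x^+2 - 1) * DD.
Definition vb := (x^+2 - 1) * (DD + NN).
Definition vc := x * (x^+2 - 1) * NN.
Definition vd := x * (x * NN + DD).
Definition ve := x * (x * DD + NN).
Definition vf := (x^+2 - 1) * DD.
Definition vfun (i : nat) : R :=
  match i with 0 => va | 1 => vb | 2 => vc | 3 => vd | 4 => ve | 5 => vf | _ => vb end%N.
Definition pK := x^+6 - (2*K+6) * x^+4 + (5*K+8) * x^+2 - (2*K+2) * x - K - 1.
End V.

Lemma eq_mod (R : comPzRingType) (P E1 E2 c : R) : P = 0 -> E1 - E2 = c * P -> E1 = E2.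
Proof. by move=> -> /eqP; rewrite mulr0 subr_eq0 => /eqP. Qed.

Lemma eigvec (R : realFieldType) (m k : nat) (x : R) :
  (Lm_nverts m = k + 6)%N ->
  let K : R := k%:R in pK x K = 0 ->
  (\row_(i < Lm_nverts m) vfun x K i) *m Lm_adj R m = x *: \row_(i < Lm_nverts m) vfun x K i.
Proof.
move=> hn K hp; apply/rowP => j; rewrite !mxE.
under eq_bigr => i _ do rewrite !mxE.
rewrite -(big_mkord xpredT (fun i => vfun x K i * (Lm_edge i j)%:R)).
rewrite (big_cat_nat _ (n := 6)) //=; last by rewrite hn leq_addl.
rewrite [X in _ + X](eq_big_nat _ _ (F2 := fun _ => vb x K * ((j == 0%N :> nat) || (j == 2%N :> nat))%:R)); last first.
  move=> i /andP [hi _].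
  do 6! (case: i hi => [|i] hi; first by move: hi).
  have h1 : (i.+2.+4 == 5)%N = false by [].
  have h2 : (5 < i.+2.+4)%N = true by [].
  by rewrite /Lm_edge /cyc5_edge /= h1 h2 andbF /= !andbT !andbF.
rewrite big_const_nat iter_addr_0.
have -> : (Lm_nverts m - 6 = k)%N by rewrite hn addnK.
rewrite /index_iota /= !big_cons big_nil.
case: j => j hj /=.
case: j hj => [|j] hj.
  by apply: (@eq_mod _ _ _ _ (1 - x^+2) hp); rewrite /vfun /pK /va /vb /vc /vd /ve /vf /DD /NN /K /=; ring.
do 5! (case: j hj => [|j] hj; first by apply: (@eq_mod _ _ _ _ 0 hp); rewrite /vfun /pK /va /vb /vc /vd /ve /vf /DD /NN /K /=; ring).
apply: (@eq_mod _ _ _ _ 0 hp); rewrite /vfun /pK /va /vb /vc /vd /ve /vf /DD /NN /K /=; ring.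
Qed.
Lemma perron (R : realFieldType) n (A : 'M[R]_n) (w : 'rV[R]_n) (l mu : R) :
  (forall i j, 0 <= A i j) -> (forall i, 0 < w 0 i) -> w *m A = l *: w ->
  eigenvalue A mu -> mu <= l.
Proof.
move=> A0 w0 hw /eigenvalueP [u hu u0].
have [i ui] : exists i, u 0 i != 0.
  apply/existsP; apply: contraR u0; rewrite negb_exists => /forallP H.
  by apply/eqP/rowP => i; rewrite mxE; apply/eqP; move: (H i); rewrite negbK.
pose F := fun j => `|u 0 j| / w 0 j.
case: (@arg_maxP _ R _ i xpredT F isT) => j _ Hj.
pose c := F j.
have Hk k : `|u 0 k| <= c * w 0 k.
  move: (Hj k isT); rewrite /F /=. rewrite ler_pdivrMr //.
have cpos : 0 < c.
  by apply: lt_le_trans (Hj i isT); rewrite /F /= divr_gt0 // normr_gt0.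
have ujpos : 0 < `|u 0 j|.
  by move: cpos; rewrite /c /F /= pmulr_lgt0 ?invr_gt0.
have e1 : `|mu| * `|u 0 j| <= l * `|u 0 j|.
  have -> : `|mu| * `|u 0 j| = `|(u *m A) 0 j| by rewrite hu mxE normrM.
  rewrite mxE; apply: le_trans (ler_norm_sum _ _ _) _.
  apply: (@le_trans _ _ (\sum_i c * (w 0 i * A i j))).
    apply: ler_sum => k _; rewrite normrM (ger0_norm (A0 _ _)) mulrA.
    by apply: ler_wpM2r => //; apply: Hk.
  rewrite -mulr_sumr.
  have : (w *m A) 0 j = l * w 0 j by rewrite hw mxE.
  rewrite mxE => ->.
  have -> : `|u 0 j| = c * w 0 j by rewrite /c /F divfK // gt_eqF.
  by rewrite mulrCA.
have : `|mu| <= l by rewrite -(ler_pM2r ujpos).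
by apply: le_trans; apply: ler_norm.
Qed.

Lemma largest (R : realFieldType) (m k : nat) (x : R) :
  (Lm_nverts m = k + 6)%N -> 1 < x -> 0 < DD x k%:R -> pK x k%:R = 0 ->
  largest_eigenvalue (Lm_adj R m) x.
Proof.
move=> hn x1 D0 hp.
have hw := @eigvec R m k x hn hp.
set w := \row_(i < Lm_nverts m) vfun x k%:R i in hw.
have x0 : 0 < x by apply: lt_trans x1.
have X0 : 0 < x^+2 - 1 by rewrite subr_gt0 expr_gt1 ?(ltW x0).
have N0 : 0 < NN x k%:R by rewrite /NN addr_gt0 // mulr_gt0 // ltr_wpDl.
have pos i : 0 < w 0 i.
  rewrite mxE; case: i => i _ /=.
  do 6! (case: i => [|i]; first by rewrite /= /va /vb /vc /vd /ve /vf; repeat first [assumption | apply: mulr_gt0 | apply: addr_gt0]).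
  by rewrite /= /vb; repeat first [assumption | apply: mulr_gt0 | apply: addr_gt0].
split.
  apply/eigenvalueP; exists w => //.
  apply/negP => /eqP w0.
  have h0 : (0 < Lm_nverts m)%N by rewrite hn addnS.
  by have := pos (Ordinal h0); rewrite w0 mxE ltxx.
move=> mu; apply: (@perron R _ _ w) => //.
by move=> i j; rewrite mxE ler0n.
Qed.

Lemma DDpos (R : realFieldType) (y K : R) : 0 <= K -> K + 3 <= y^+2 -> 0 < DD y K.
Proof.
move=> K0 hy.
have h : 0 <= y^+2 * (y^+2 - K - 3) by apply: mulr_ge0; [exact: sqr_ge0 | lra].
have -> : DD y K = y^+2 * (y^+2 - K - 3) + (K + 1) by rewrite /DD; ring.
lra.
Qed.

Lemma root_in (R : rcfType) (m k : nat) (lo hi : R) :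
  (Lm_nverts m = k + 6)%N -> 1 < lo -> lo <= hi -> k%:R + 3 <= lo^+2 ->
  pK lo k%:R < 0 -> 0 < pK hi k%:R ->
  exists l, largest_eigenvalue (Lm_adj R m) l /\ lo < l < hi.
Proof.
move=> hn lo1 lohi hlo plo phi.
set K : R := k%:R.
pose P : {poly R} := 'X^6 - (2*K+6)%:P * 'X^4 + (5*K+8)%:P * 'X^2 - (2*K+2)%:P * 'X - (K+1)%:P.
have hP y : P.[y] = pK y K.
  by rewrite /P !(hornerD, hornerN, hornerCM, hornerC, hornerXn, hornerX) /pK; ring.
have hs : P.[lo] <= 0 <= P.[hi] by rewrite !hP; apply/andP; split; apply: ltW.
have [l /andP [h1 h2] hr] := @poly_ivt R P lo hi lohi hs.
have pl : pK l K = 0 by rewrite -hP; apply/eqP.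
have l1 : lo < l by rewrite lt_neqAle h1 andbT; apply/eqP => e; move: plo; rewrite e pl ltxx.
have l2 : l < hi by rewrite lt_neqAle h2 andbT; apply/eqP => e; move: phi; rewrite -e pl ltxx.
exists l; split; last by rewrite l1 l2.
apply: largest hn _ _ pl; first by apply: lt_trans l1.
apply: DDpos; first by rewrite /K ler0n.
have lo0 : 0 <= lo by lra.
have : lo^+2 <= l^+2 by rewrite !expr2; apply: ler_pM => //; apply: ltW.
move: hlo; rewrite /K; lra.
Qed.

Lemma sqrt_lt_l (R : rcfType) (a l : R) : 0 < l -> a < l^+2 -> Num.sqrt a < l.
Proof.
move=> l0 h; rewrite -(ger0_norm (ltW l0)) -sqrtr_sqr ltr_sqrt //.
by rewrite exprn_gt0.
Qed.

Lemma sqrt_gt_l (R : rcfType) (a l : R) : 0 < l -> l^+2 < a -> l < Num.sqrt a.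
Proof.
move=> l0 h; rewrite -(ger0_norm (ltW l0)) -sqrtr_sqr ltr_sqrt //.
by apply: lt_trans h; rewrite exprn_gt0.
Qed.

Lemma exp_sub {R : rcfType} {y s : R} : y^+2 = s -> y^+6 = s^+3 /\ y^+4 = s^+2.
Proof. by move=> <-; rewrite -!exprM. Qed.

Lemma big_lo (R : rcfType) (K y : R) : 3 <= K -> 0 <= y -> y^+2 = 2*K + 7/2 -> pK y K < 0.
Proof.
move=> K3 y0 hy; have [e6 e4] := exp_sub hy.
have h : 0 <= (2*K+2)*y by apply: mulr_ge0 => //; lra.
rewrite /pK e6 e4 hy; lra.
Qed.

Lemma big_hi (R : rcfType) (K y : R) : 3 <= K -> 0 <= y -> y^+2 = 2*K + 4 -> 0 < pK y K.
Proof.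
move=> K3 y0 hy; have [e6 e4] := exp_sub hy.
have h : (2*K+2)*y < 2*K^+2 + 3*K - 1.
  have Y0 : 0 < 2*K^+2 + 3*K - 1.
    have : 9 <= K^+2 by rewrite expr2; nra.
    lra.
  have X0 : 0 <= (2*K+2)*y by apply: mulr_ge0 => //; lra.
  have hsq : ((2*K+2)*y)^+2 < (2*K^+2 + 3*K - 1)^+2.
    rewrite exprMn hy -subr_gt0.
    set t := K - 3.
    have -> : K = t + 3 by rewrite /t; ring.
    have t0 : 0 <= t by rewrite /t; lra.
    have t2 : 0 <= t^+2 by apply: exprn_ge0.
    have t3 : 0 <= t^+3 by apply: exprn_ge0.
    have t4 : 0 <= t^+4 by apply: exprn_ge0.
    have -> : (2 * (t + 3) ^+ 2 + 3 * (t + 3) - 1) ^+ 2 - (2 * (t + 3) + 2) ^+ 2 * (2 * (t + 3) + 4)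
       = 4 * t^+4 + 52 * t^+3 + 225 * t^+2 + 332 * t + 36 by ring.
    lra.
  rewrite ltNge; apply/negP => hle.
  have := ler_pM (ltW Y0) (ltW Y0) hle hle.
  move: hsq; rewrite !expr2; lra.
rewrite /pK e6 e4 hy; lra.
Qed.

Lemma small (R : rcfType) (m k : nat) (lo hi : R) :
  (Lm_nverts m = k + 6)%N -> 1 < lo -> lo <= hi -> k%:R + 3 <= lo^+2 ->
  pK lo k%:R < 0 -> 0 < pK hi k%:R -> m%:R - 2 < lo^+2 ->
  exists l, largest_eigenvalue (Lm_adj R m) l /\ Num.sqrt (m%:R - 2) < l /\ lo <= l < hi.
Proof.
move=> hn h1 h2 h3 h4 h5 h6.
have [l [hl /andP [l1 l2]]] := @root_in R m k lo hi hn h1 h2 h3 h4 h5.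
exists l; split => //; split; last by rewrite (ltW l1) l2.
apply: sqrt_lt_l; first by lra.
have : lo^+2 <= l^+2 by rewrite !expr2; apply: ler_pM; lra.
lra.
Qed.


Lemma case6 (R : rcfType) (m : nat) : (Lm_nverts m = 0 + 6)%N -> (m%:R : R) = 6 ->
  exists l, largest_eigenvalue (Lm_adj R m) l /\ Num.sqrt (m%:R - 2) < l /\
    (2 + 1149 / 10 ^+ 4) <= l < (2 + 1150 / 10 ^+ 4).
Proof.
move=> hn mR; apply: small hn _ _ _ _ _ _.
- lra.
- lra.
- lra.
- rewrite /pK. lra.
- rewrite /pK. lra.
- rewrite mR. lra.
Qed.

Lemma case8 (R : rcfType) (m : nat) : (Lm_nverts m = 1 + 6)%N -> (m%:R : R) = 8 ->
  exists l, largest_eigenvalue (Lm_adj R m) l /\ Num.sqrt (m%:R - 2) < l /\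
    (2 + 4938 / 10 ^+ 4) <= l < (2 + 4939 / 10 ^+ 4).
Proof.
move=> hn mR; apply: small hn _ _ _ _ _ _.
- lra.
- lra.
- lra.
- rewrite /pK. lra.
- rewrite /pK. lra.
- rewrite mR. lra.
Qed.

Lemma case10 (R : rcfType) (m : nat) : (Lm_nverts m = 2 + 6)%N -> (m%:R : R) = 10 ->
  exists l, largest_eigenvalue (Lm_adj R m) l /\ Num.sqrt (m%:R - 2) < l /\
    (2 + 8424 / 10 ^+ 4) <= l < (2 + 8425 / 10 ^+ 4).
Proof.
move=> hn mR; apply: small hn _ _ _ _ _ _.
- lra.
- lra.
- lra.
- rewrite /pK. lra.
- rewrite /pK. lra.
- rewrite mR. lra.
Qed.

Theorem lemma2p1 (R : rcfType) (m : nat) :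
  ~~ odd m -> (6 <= m)%N ->
  exists l : R, largest_eigenvalue (Lm_adj R m) l /\
    ((m \in [:: 6; 8; 10]%N) -> Num.sqrt (m%:R - 2) < l) /\
    ((12 <= m)%N -> Num.sqrt (m%:R - 5 / 2) < l /\ l < Num.sqrt (m%:R - 2)) /\
    (m = 6%N -> (2 + 1149 / 10 ^+ 4) <= l < (2 + 1150 / 10 ^+ 4)) /\
    (m = 8%N -> (2 + 4938 / 10 ^+ 4) <= l < (2 + 4939 / 10 ^+ 4)) /\
    (m = 10%N -> (2 + 8424 / 10 ^+ 4) <= l < (2 + 8425 / 10 ^+ 4)).
Proof.
move=> hodd h6.
have e := odd_double_half m.
rewrite (negbTE hodd) add0n -muln2 in e.
set k := (m./2 - 3)%N.
have hm : m = (k * 2 + 6)%N by rewrite /k; lia.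
have hn : (Lm_nverts m = k + 6)%N by rewrite /Lm_nverts /k; lia.
have mR : (m%:R : R) = 2 * k%:R + 6 by rewrite {1}hm natrD natrM; ring.
clearbody k; clear e.
have [k0|[k0|[k0|k3]]] : (k = 0 \/ k = 1 \/ k = 2 \/ 3 <= k)%N by lia.
- subst k.
  have mv : (m%:R : R) = 6 by rewrite mR; ring.
  have [l [hl [hs hb]]] := @case6 R m hn mv.
  exists l; split => //; split; first by move=> _.
  rewrite hm; split; first by [].
  by do ! split => //.
- subst k.
  have mv : (m%:R : R) = 8 by rewrite mR; ring.
  have [l [hl [hs hb]]] := @case8 R m hn mv.
  exists l; split => //; split; first by move=> _.
  rewrite hm; split; first by [].
  by do ! split => //.
- subst k.
  have mv : (m%:R : R) = 10 by rewrite mR; ring.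
  have [l [hl [hs hb]]] := @case10 R m hn mv.
  exists l; split => //; split; first by move=> _.
  rewrite hm; split; first by [].
  by do ! split => //.
have K3 : 3 <= (k%:R : R) by rewrite (ler_nat R 3 k).
have lo0 : 0 <= Num.sqrt (m%:R - 5/2 : R) by apply: sqrtr_ge0.
have hi0 : 0 <= Num.sqrt (m%:R - 2 : R) by apply: sqrtr_ge0.
have lo2 : Num.sqrt (m%:R - 5/2 : R) ^+ 2 = 2 * k%:R + 7/2.
  have hpos : 0 <= (m%:R - 5/2 : R) by rewrite mR; lra.
  by rewrite sqr_sqrtr // mR; lra.
have hi2 : Num.sqrt (m%:R - 2 : R) ^+ 2 = 2 * k%:R + 4.
  have hpos : 0 <= (m%:R - 2 : R) by rewrite mR; lra.
  by rewrite sqr_sqrtr // mR; lra.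
have lo1 : 1 < Num.sqrt (m%:R - 5/2 : R) by apply: sqrt_gt_l; rewrite ?mR; lra.
have lohi : Num.sqrt (m%:R - 5/2 : R) <= Num.sqrt (m%:R - 2 : R).
  by rewrite ler_sqrt; [lra | rewrite mR; lra].
have hk : k%:R + 3 <= Num.sqrt (m%:R - 5/2 : R) ^+ 2 by rewrite lo2; lra.
have [l [hl /andP [l1 l2]]] := @root_in R m k _ _ hn lo1 lohi hk (@big_lo R _ _ K3 lo0 lo2) (@big_hi R _ _ K3 hi0 hi2).
exists l; split => //; split.
  move=> h; exfalso; move: h; rewrite !inE => /or3P [] /eqP h; lia.
split; first by move=> _; rewrite l1 l2.
split; first by move=> h; exfalso; lia.
split; first by move=> h; exfalso; lia.
by move=> h; exfalso; lia.
Qed.
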